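(* Let $q=p^m$ with $p>3$ prime and $m\ge1$, let $f(x)=x^{q+2}$ on $\mathbb{F}_{q^2}$, and for $b\in\mathbb{F}_{q^2}$ let $\delta(b)=\#\{u\in\mathbb{F}_{q^2}:\ 2u^{q+1}+u^2=b\}$. Then $\delta(3)=4$ if $q\equiv 5\pmod 6$, and $\delta(3)=2$ otherwise. In particular, if $q\equiv 5\pmod 6$ then the differential uniformity of $f$ is $\delta_f=4$.
   Context: $\delta_f(a,b)=\#\{x\in\mathbb{F}_{q^2}: f(x+a)-f(x)=b\}$, and $\delta_f=\max_{a\in\mathbb{F}_{q^2}^*,b\in\mathbb{F}_{q^2}}\delta_f(a,b)$; note $\delta(b)=\delta_f(1,b+\tfrac14)$. *)

(* Defs.v *)
From mathcomp Require Import all_boot all_order all_algebra all_field.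
Set Implicit Arguments. Unset Strict Implicit. Unset Printing Implicit Defensive.
Import GRing.Theory.
Local Open Scope ring_scope.

Definition diff_count (F : finFieldType) (f : F -> F) (a b : F) : nat :=
  #|[set x : F | f (x + a) - f x == b]|.

Definition diff_unif (F : finFieldType) (f : F -> F) : nat :=
  \max_(a : F | a != 0) \max_(b : F) diff_count f a b.

Definition delta_q (F : finFieldType) (q : nat) (b : F) : nat :=
  #|[set u : F | 2 * u ^+ q.+1 + u ^+ 2 == b]|.

(* Main.v *)
Require Import Defs.
From mathcomp Require Import all_boot all_order all_algebra all_field all_fingroup all_solvable.
From mathcomp Require Import ring zify.
Import GRing.Theory.
Local Open Scope ring_scope.

Section Basics.
Variable F : finFieldType.
Variables p m : nat.
Hypothesis pp : prime p.
Hypothesis p3 : (3 < p)%N.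
Hypothesis m0 : (0 < m)%N.
Hypothesis cardF : #|F| = ((p ^ m) ^ 2)%N.
Local Notation q := (p ^ m)%N.

Lemma pcharF : p \in [pchar F].
Proof. by apply: (card_finPcharP (n := (m * 2)%N)) => //; rewrite cardF expnM. Qed.

Lemma QDe e (x y : F) : (x + y) ^+ (p ^ e) = x ^+ (p ^ e) + y ^+ (p ^ e).
Proof.
elim: e x y => // e IHe x y.
by rewrite !expnSr !exprM IHe -!(pFrobenius_autE pcharF) rmorphD.
Qed.
Lemma QD (x y : F) : (x + y) ^+ q = x ^+ q + y ^+ q.
Proof. exact: QDe. Qed.

Lemma q0 : (0 < q)%N.
Proof. by rewrite expn_gt0 prime_gt0. Qed.

Lemma QN (x : F) : (- x) ^+ q = - x ^+ q.
Proof.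
apply/eqP; rewrite -addr_eq0 -QD addNr expr0n.
by case: q q0.
Qed.

Lemma Qnat n : (n%:R : F) ^+ q = n%:R.
Proof.
elim: n => [|n IH]; first by rewrite expr0n; case: q q0.
by rewrite -natr1 QD IH expr1n.
Qed.

Lemma QQ (x : F) : (x ^+ q) ^+ q = x.
Proof. by rewrite -exprM mulnn -cardF expf_card. Qed.

Lemma natF_neq0 n : (0 < n)%N -> (n < p)%N -> (n%:R : F) != 0.
Proof.
move=> n0 np; rewrite -(dvdn_pcharf pcharF); apply/negP => /dvdn_leq.
by move=> /(_ n0); rewrite leqNgt np.
Qed.

Lemma two_neq0 : (2 : F) != 0.
Proof. by apply: natF_neq0 => //; lia. Qed.
Lemma three_neq0 : (3 : F) != 0.
Proof. by apply: natF_neq0 => //; lia. Qed.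
Lemma four_neq0 : (4 : F) != 0.
Proof. have -> : (4 : F) = 2 * 2 by ring. by rewrite mulf_neq0 // two_neq0. Qed.


Lemma quad2 (c2 c1 c0 : F) : c2 != 0 ->
  exists r1 r2, forall x, c2 * x ^+ 2 + c1 * x + c0 = 0 -> x = r1 \/ x = r2.
Proof.
move=> c20.
case: (pickP (fun x => c2 * x ^+ 2 + c1 * x + c0 == 0)) => [r /eqP Hr | none].
  exists r, (- (c2 * r + c1) / c2) => x Hx.
  have : (x - r) * (c2 * x + (c2 * r + c1)) = 0.
    have -> : (x - r) * (c2 * x + (c2 * r + c1)) =
      (c2 * x ^+ 2 + c1 * x + c0) - (c2 * r ^+ 2 + c1 * r + c0) by ring.
    by rewrite Hx Hr subrr.
  move/eqP; rewrite mulf_eq0 => /orP [/eqP H | /eqP H].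
    by left; apply/eqP; rewrite -subr_eq0 H.
  right; apply: (mulfI c20); rewrite [RHS]mulrC divfK //.
  by apply/eqP; rewrite -addr_eq0 H.
exists 0, 0 => x Hx; move: (none x); by rewrite Hx eqxx.
Qed.

Lemma keyeq (b u : F) : 2 * u ^+ q.+1 + u ^+ 2 = b ->
  3 * (u ^+ q.+1) ^+ 2 - 2 * (b + b ^+ q) * u ^+ q.+1 + b * b ^+ q = 0.
Proof.
move=> h1.
have h2 : 2 * u ^+ q.+1 + (u ^+ q) ^+ 2 = b ^+ q.
  rewrite -h1 QD exprMn (Qnat 2) exprSr exprMn QQ exprAC; ring.
rewrite -h2 -h1 (exprSr u q); set v := u ^+ q; ring.
Qed.

Lemma delta_le4 (b : F) : (delta_q q b <= 4)%N.
Proof.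
have [r1 [r2 Hr]] := @quad2 3 (- (2 * (b + b ^+ q))) (b * b ^+ q) three_neq0.
have [t1 [t1' Ht1]] := @quad2 1 0 (- (b - 2 * r1)) (oner_neq0 F).
have [t2 [t2' Ht2]] := @quad2 1 0 (- (b - 2 * r2)) (oner_neq0 F).
rewrite /delta_q; apply: (leq_trans _ (card_size [:: t1; t1'; t2; t2'])).
apply: subset_leq_card; apply/subsetP => u; rewrite inE => /eqP hu.
have hN := @keyeq b u hu.
have : u ^+ q.+1 = r1 \/ u ^+ q.+1 = r2.
  by apply: Hr; rewrite -hN; ring.
rewrite !inE => -[hr | hr].
  have : u = t1 \/ u = t1' by apply: Ht1; rewrite -hr -hu; ring.
  by case=> ->; rewrite eqxx ?orbT.
have : u = t2 \/ u = t2' by apply: Ht2; rewrite -hr -hu; ring.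
by case=> ->; rewrite eqxx ?orbT.
Qed.

Lemma diff_delta (a b : F) : a != 0 ->
  diff_count (fun x : F => x ^+ (q + 2)) a b = delta_q q (b / a ^+ (q + 2) - 1 / 4).
Proof.
move=> a0; rewrite /diff_count /delta_q.
pose psi u := a * (u - 2^-1).
have inj : injective psi by move=> x y /(mulfI a0) /addIr.
rewrite -(card_preimset _ inj); apply: eq_card => u; rewrite !inE.
have E : (psi u + a) ^+ (q + 2) - psi u ^+ (q + 2)
         = a ^+ (q + 2) * (2 * u ^+ q.+1 + u ^+ 2 + 1 / 4).
  have -> : psi u + a = a * (u + 2^-1) by rewrite /psi; field; exact: two_neq0.
  rewrite /psi !exprD !exprMn !QD QN exprVn (Qnat 2) (exprSr u q).
  set v := u ^+ q; set A := a ^+ q.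
  by field; rewrite four_neq0 two_neq0.
rewrite E; have K0 : a ^+ (q + 2) != 0 by rewrite expf_neq0.
apply/eqP/eqP => H.
  by rewrite -H; field; rewrite ?four_neq0 ?two_neq0 ?K0.
by rewrite H; field; rewrite ?four_neq0 ?two_neq0 ?K0.
Qed.


Lemma sq_eq (u t : F) : u ^+ 2 = t ^+ 2 -> u = t \/ u = - t.
Proof.
move=> h; have : (u - t) * (u + t) = 0.
  have -> : (u - t) * (u + t) = u ^+ 2 - t ^+ 2 by ring.
  by rewrite h subrr.
move/eqP; rewrite mulf_eq0 => /orP [/eqP H | /eqP H].
  by left; apply/eqP; rewrite -subr_eq0 H.
by right; apply/eqP; rewrite -addr_eq0 H.
Qed.

Lemma q_odd : odd q.
Proof.
rewrite oddX (gtn_eqF m0) /= -[odd p]negbK -dvdn2; rewrite (dvdn_prime2 (isT : prime 2) pp); apply/negP.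
by move/eqP => h; move: p3; rewrite -h.
Qed.

Lemma q_not3 : ~~ (3 %| q)%N.
Proof.
rewrite Euclid_dvdX // m0 andbT; rewrite (dvdn_prime2 (isT : prime 3) pp); apply/negP.
by move/eqP => h; move: p3; rewrite -h.
Qed.

Lemma q_mod3 : (q %% 3 = 1 \/ q %% 3 = 2)%N.
Proof. have := q_not3; rewrite /dvdn; lia. Qed.

Lemma q_mod6 : (q %% 6 == 5)%N = (q %% 3 == 2)%N.
Proof.
have h2 : (q %% 2 = 1)%N by rewrite modn2 q_odd.
have := q_not3; rewrite /dvdn; lia.
Qed.

Lemma three_dvd : (3 %| #|F|.-1)%N.
Proof.
rewrite cardF /dvdn -mulnn.
have : ((q * q) %% 3 = 1)%N.
  by rewrite -modnMml -modnMmr; case: q_mod3 => ->.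
set X := (q * q)%N; lia.
Qed.

Lemma omega_ex : exists w : F, w ^+ 3 = 1 /\ w ^+ 2 + w + 1 = 0.
Proof.
have H3 : (3 %| #|[set: {unit F}]|)%N by rewrite card_finField_unit three_dvd.
have [x _ ox] := @Cauchy _ 3 [set: {unit F}]%G (isT : prime 3) H3.
have w3 : (FinRing.uval x) ^+ 3 = 1.
  by rewrite -FinRing.val_unitX -ox expg_order.
have w1 : FinRing.uval x != 1.
  apply/negP => /eqP h.
  have : x = 1%g by apply: val_inj; rewrite /= h.
  by move=> hx; move: ox; rewrite hx order1.
exists (FinRing.uval x); split => //.
set w := FinRing.uval x in w3 w1 *.
have : (w - 1) * (w ^+ 2 + w + 1) = 0.
  have -> : (w - 1) * (w ^+ 2 + w + 1) = w ^+ 3 - 1 by ring.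
  by rewrite w3 subrr.
move/eqP; rewrite mulf_eq0 subr_eq0 (negPf w1) /=; by move/eqP.
Qed.


Lemma Qsol (u : F) : 2 * u ^+ q.+1 + u ^+ 2 = 3 ->
  u ^+ q = u \/ u ^+ q = - u.
Proof.
move=> h1.
have h2 := congr1 (fun z => z ^+ q) h1; move: h2 => /=.
rewrite QD exprMn (Qnat 2) (Qnat 3) exprSr exprMn QQ exprAC => h2.
apply: sq_eq; apply/eqP; rewrite -subr_eq0; apply/eqP.
rewrite (exprSr u q) in h1.
have -> : (u ^+ q) ^+ 2 - u ^+ 2 =
  (2 * (u * u ^+ q) + (u ^+ q) ^+ 2) - (2 * (u ^+ q * u) + u ^+ 2) by ring.
by rewrite h1 h2 subrr.
Qed.

Lemma xNx (x : F) : x = - x -> x = 0.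
Proof.
move=> h; have : 2 * x = 0.
  have -> : 2 * x = x - - x by ring.
  by rewrite -h subrr.
by move/eqP; rewrite mulf_eq0 (negPf two_neq0) /= => /eqP.
Qed.

Lemma delta3 : delta_q q (3 : F) = (if q %% 6 == 5 then 4 else 2)%N.
Proof.
have [w [w3 hw]] := omega_ex.
set s := 2 * w + 1.
have hs2 : s ^+ 2 = - 3.
  have -> : s ^+ 2 = 4 * (w ^+ 2 + w + 1) - 3 by rewrite /s; ring.
  by rewrite hw; ring.
have hwq : w ^+ q = w ^+ (q %% 3).
  by rewrite {1}(divn_eq q 3) exprD mulnC exprM w3 expr1n mul1r.
have hsq : s ^+ q = 2 * w ^+ q + 1 by rewrite /s QD exprMn (Qnat 2) expr1n.
have h30 : (3 : F) != 0 := three_neq0.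
have hs0 : s != 0.
  apply/negP => /eqP h; move: h30; rewrite -oppr_eq0 -hs2 h expr0n /=.
  by rewrite eqxx.
have hs1 : s ^+ 2 != 1.
  rewrite hs2; apply/negP => /eqP h; move: four_neq0.
  have -> : (4 : F) = 1 - (- 3) by ring.
  by rewrite h subrr eqxx.
have n11 : (1 : F) != -1.
  apply/negP => /eqP h; move: two_neq0.
  have -> : (2 : F) = 1 - (- 1) by ring.
  by rewrite -h subrr eqxx.
have hm1 : (- 1 : F) ^+ q.+1 = 1.
  by rewrite exprSr QN expr1n mulrNN mulr1.
have sq1 : forall u : F, u ^+ 2 = 1 -> u = 1 \/ u = -1.
  by move=> u h; apply: sq_eq; rewrite h expr1n.
have hsol1 : forall u : F, u = 1 \/ u = -1 -> 2 * u ^+ q.+1 + u ^+ 2 = 3.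
  by move=> u [->|->]; rewrite ?hm1 ?sqrrN !expr1n; ring.
have fwd : forall u : F, 2 * u ^+ q.+1 + u ^+ 2 = 3 ->
    (u = 1 \/ u = -1) \/ (u ^+ 2 = s ^+ 2 /\ u ^+ q = - u).
  move=> u h; have [hv | hv] := @Qsol u h.
    left; apply: sq1; apply: (mulfI h30); rewrite mulr1 -{2}h (exprSr u q) hv; ring.
  right; split => //.
  rewrite hs2; apply: (canRL (@opprK _)); rewrite -h (exprSr u q) hv; ring.
rewrite /delta_q q_mod6.
case: q_mod3 => hq; rewrite hq /=.
  have hsq' : s ^+ q = s by rewrite hsq hwq hq expr1.
  rewrite (_ : #|_| = #|[:: 1; -1 : F]|).
    by apply/card_uniqP; rewrite /= inE n11.
  apply: eq_card => u; rewrite !inE; apply/eqP/idP.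
    move=> h; case: (fwd u h) => [[->|->] | [hu2 hv]]; rewrite ?eqxx ?orbT //.
    have : u ^+ q = u by case: (@sq_eq _ _ hu2) => ->; rewrite ?QN hsq'.
    rewrite hv => /esym /xNx u0; move: hs2; rewrite -hu2 u0 expr0n => /eqP.
    by rewrite eq_sym oppr_eq0 (negPf h30).
  by case/orP => /eqP ?; apply: hsol1; [left|right].
have hsq' : s ^+ q = - s.
  rewrite hsq hwq hq; apply/eqP; rewrite -addr_eq0; apply/eqP.
  have -> : 2 * w ^+ 2 + 1 + s = 2 * (w ^+ 2 + w + 1) by rewrite /s; ring.
  by rewrite hw mulr0.
have n1s : (1 == s) = false.
  by apply/negP => /eqP h; move: hs1; rewrite -h expr1n eqxx.
have n1ms : (1 == - s) = false.
  apply/negP => /eqP h; move: hs1; rewrite -[s]opprK -h sqrrN expr1n eqxx //.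
have nm1s : (-1 == s) = false.
  by apply/negP => /eqP h; move: hs1; rewrite -h sqrrN expr1n eqxx.
have nm1ms : (-1 == - s) = false by rewrite eqr_opp.
have nsms : (s == - s) = false.
  by apply/negP => /eqP /xNx h; move: hs0; rewrite h eqxx.
rewrite (_ : #|_| = #|[:: 1; -1; s; -s]|).
  by apply/card_uniqP; rewrite /= !inE (negPf n11) n1s n1ms nm1s nm1ms nsms.
apply: eq_card => u; rewrite !inE; apply/eqP/idP.
  move=> h; case: (fwd u h) => [[->|->] | [hu2 hv]]; rewrite ?eqxx ?orbT //.
  by case: (@sq_eq _ _ hu2) => ->; rewrite eqxx ?orbT.
case/orP => [/eqP ->|]; first by apply: hsol1; left.
case/orP => [/eqP ->|]; first by apply: hsol1; right.
case/orP => /eqP ->; rewrite (exprSr _ q) ?QN hsq'.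
  have -> : 2 * (- s * s) + s ^+ 2 = - s ^+ 2 by ring.
  by rewrite hs2 opprK.
have -> : 2 * (- - s * - s) + (- s) ^+ 2 = - s ^+ 2 by ring.
by rewrite hs2 opprK.
Qed.

End Basics.

Theorem proposition5 (F : finFieldType) (p m : nat) :
  prime p -> (3 < p)%N -> (0 < m)%N -> #|F| = ((p ^ m) ^ 2)%N ->
  let q := (p ^ m)%N in
  delta_q q (3 : F) = (if q %% 6 == 5 then 4 else 2)%N /\
  (q %% 6 = 5 -> diff_unif (fun x : F => x ^+ (q + 2)) = 4)%N.
Proof.
move=> pp p3 m0 cF q; split; first exact: (@delta3 F p m pp p3 m0 cF).
move=> h5; apply/eqP; rewrite eqn_leq; apply/andP; split.
  apply/bigmax_leqP => a a0; apply/bigmax_leqP => b _.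
  rewrite (@diff_delta F p m pp p3 m0 cF) //. exact: (@delta_le4 F p m pp p3 cF).
rewrite /diff_unif; apply: (leq_trans _ (@leq_bigmax_cond _ _ _ 1 (oner_neq0 F))).
apply: (leq_trans _ (@leq_bigmax _ _ (3 + 1 / 4))).
rewrite (@diff_delta F p m pp p3 m0 cF) ?oner_neq0 // expr1n divr1 addrK.
by rewrite (@delta3 F p m pp p3 m0 cF) h5 eqxx.
Qed.
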